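(* Let $(\mathcal{G}(u_0,v_0),-\Omega^2\,du\,dv)$ with radial function $r$ and stress-energy components $T_{uu},T_{uv},T_{vv}$ be as described in the context, satisfying assumptions (I)–(VII). Suppose there exists $\delta>0$ such that, with $\mathcal{W}=\mathcal{W}(\delta)$, condition (A), namely $T_{uv}\Omega^{-2}<\frac{1}{4r^2}$, holds at every point of $\mathcal{A}\cap\mathcal{W}$. If $\mathcal{G}(u_0,v_0)$ does not contain a marginally trapped tube which is asymptotic to the event horizon, then $\mathcal{W}\cap\mathcal{R}$ contains a rectangle $K(u_1,v_1)=[0,u_1]\times[v_1,\infty)$ for some $u_1\in(0,u_0]$, $v_1\in[v_0,\infty)$.
   Context: Fix double null coordinates $(u,v)$ on $\mathbb{R}^2$ with Minkowski metric $-du\,dv$, time-oriented so that $u$ and $v$ increase toward the future. For $u,v>0$ let $K(u,v)=[0,u]\times[v,\infty)$. Fix $u_0,v_0>0$, $\mathcal{C}_{in}=[0,u_0]\times\{v_0\}$, $\mathcal{C}_{out}=\{0\}\times[v_0,\infty)$; causal notions $J^\pm,I^\pm$ refer to $K(u_0,v_0)$. Let $\mathcal{G}(u_0,v_0)\subset K(u_0,v_0)$ be a globally hyperbolic, relatively open subset containing $\mathcal{C}_{in}\cup\mathcal{C}_{out}$, with metric $-\Omega^2du\,dv$ ($\Omega>0$ smooth), smooth radial function $r\ge0$ with $r>0$ on $\mathcal{C}_{in}\cup\mathcal{C}_{out}$, and smooth functions $T_{uu},T_{uv},T_{vv}$ (components of the stress-energy tensor of the spherically symmetric spacetime $-\Omega^2du\,dv+r^2g_{S^2}$)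 such that $\partial_u(\Omega^{-2}\partial_u r)=-r\Omega^{-2}T_{uu}$, $\partial_v(\Omega^{-2}\partial_v r)=-r\Omega^{-2}T_{vv}$, $\partial_u m=2r^2\Omega^{-2}(T_{uv}\partial_u r-T_{uu}\partial_v r)$, $\partial_v m=2r^2\Omega^{-2}(T_{uv}\partial_v r-T_{vv}\partial_u r)$, with Hawking mass $m=\frac r2(1+4\Omega^{-2}\partial_u r\partial_v r)$. Define $\mathcal{R}=\{\partial_v r>0,\partial_u r<0\}$, $\mathcal{T}=\{\partial_v r<0,\partial_u r<0\}$, $\mathcal{A}=\{\partial_v r=0,\partial_u r<0\}$ (the marginally trapped tube), $r_+=\sup_{\mathcal{C}_{out}}r$, $m_+=\sup_{\mathcal{C}_{out}}m$, and for $\delta>0$, $\mathcal{W}(\delta)=\{(u,v)\in\mathcal{G}(u_0,v_0): r(u,v)\ge r_+-\delta\}$. Assumptions: (I) $T_{uu},T_{uv},T_{vv}\ge0$; (II) $J^-(\mathcal{G}(u_0,v_0))\subset\mathcal{G}(u_0,v_0)$; (III) $r\le r_+<\infty$ along $\mathcal{C}_{out}$; (IV) $0\le m\le m_+<\infty$ along $\mathcal{C}_{out}$; (V) $\partial_u r<0$ along $\mathcal{C}_{out}$; (VI) $\partial_v r>0$ along $\mathcal{C}_{out}$; (VII) (closures in $K(u_0,v_0)$) if $p\in\overline{\mathcal{R}}$, $q\in\overline{\mathcal{R}}\cap I^-(p)$ and $J^-(p)\cap J^+(q)\setminus\{p\}\subset\mathcal{R}\cup\mathcal{A}$, then $p\in\mathcal{R}\cup\mathcal{A}$.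 The curve $\mathcal{C}_{out}$ is regarded as the event horizon, and $i^+$ denotes the point $(0,\infty)$ of $\overline{K}(u_0,v_0)=[0,u_0]\times[v_0,\infty]$. A marginally trapped tube (portion of $\mathcal{A}$) is asymptotic to the event horizon if it has $i^+$ as a limit point in $\overline{K}(u_0,v_0)$, i.e. for every sufficiently small $u>0$ there is $v>v_0$ with $(u,v)$ in it. *)

(* Defs.v *)
From Stdlib Require Import Reals List.
From Coquelicot Require Import Coquelicot.
Open Scope R_scope.

Definition pset := R -> R -> Prop.

Definition du (f : R -> R -> R) : R -> R -> R :=
  fun u v => Derive (fun x => f x v) u.
Definition dv (f : R -> R -> R) : R -> R -> R :=
  fun u v => Derive (fun y => f u y) v.

Fixpoint iter_partial (l : list bool) (f : R -> R -> R) : R -> R -> R :=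
  match l with
  | nil => f
  | b :: l' => (if b then du else dv) (iter_partial l' f)
  end.

Definition cont2 (f : R -> R -> R) (u v : R) : Prop :=
  forall eps, 0 < eps -> exists d, 0 < d /\
    forall u' v', Rabs (u' - u) < d -> Rabs (v' - v) < d ->
      Rabs (f u' v' - f u v) < eps.

Definition open2 (U : pset) : Prop :=
  forall u v, U u v -> exists e, 0 < e /\
    forall u' v', Rabs (u' - u) < e -> Rabs (v' - v) < e -> U u' v'.

Definition smooth_on (U : pset) (f : R -> R -> R) : Prop :=
  forall (l : list bool) u v, U u v ->
    ex_derive (fun x => iter_partial l f x v) u /\
    ex_derive (fun y => iter_partial l f u y) v /\
    cont2 (iter_partial l f) u v.

Definition K (u1 v1 : R) : pset := fun u v => 0 <= u <= u1 /\ v1 <= v.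

(* Causal past / future and chronological past inside K(u0,v0), for the
   time orientation in which u and v increase to the future. *)
Definition Jminus (u0 v0 pu pv : R) : pset :=
  fun u v => K u0 v0 u v /\ u <= pu /\ v <= pv.
Definition Jplus (u0 v0 pu pv : R) : pset :=
  fun u v => K u0 v0 u v /\ pu <= u /\ pv <= v.
Definition Iminus (u0 v0 pu pv : R) : pset :=
  fun u v => K u0 v0 u v /\ u < pu /\ v < pv.

Definition closureK (u0 v0 : R) (S : pset) : pset :=
  fun u v => K u0 v0 u v /\ forall eps, 0 < eps ->
    exists u' v', S u' v' /\ Rabs (u' - u) < eps /\ Rabs (v' - v) < eps.

Definition rel_open_K (u0 v0 : R) (G : pset) : Prop :=
  exists U, open2 U /\ forall u v, G u v <-> (U u v /\ K u0 v0 u v).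

(* Global hyperbolicity of G (with the conformally flat 2d metric
   -Omega^2 du dv, causal curves are the curves along which u and v are
   nondecreasing): every causal diamond J^+(q) \cap J^-(p), p,q in G, is
   contained in G (it is then the compact coordinate rectangle
   [q_u,p_u] x [q_v,p_v]); strong causality is automatic. *)
Definition glob_hyp (u0 v0 : R) (G : pset) : Prop :=
  forall pu pv qu qv, G pu pv -> G qu qv ->
    forall u v, Jplus u0 v0 qu qv u v -> Jminus u0 v0 pu pv u v -> G u v.

Definition hawking_mass (Om r : R -> R -> R) : R -> R -> R :=
  fun u v => r u v / 2 * (1 + 4 * / (Om u v ^ 2) * du r u v * dv r u v).

Definition regR (G : pset) (r : R -> R -> R) : pset :=
  fun u v => G u v /\ dv r u v > 0 /\ du r u v < 0.
Definition trapT (G : pset) (r : R -> R -> R) : pset :=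
  fun u v => G u v /\ dv r u v < 0 /\ du r u v < 0.
Definition mttA (G : pset) (r : R -> R -> R) : pset :=
  fun u v => G u v /\ dv r u v = 0 /\ du r u v < 0.

Definition Wset (G : pset) (r : R -> R -> R) (rplus delta : R) : pset :=
  fun u v => G u v /\ r u v >= rplus - delta.

(* A set S has i^+ = (0,oo) as a limit point, in the sense of the paper:
   for every sufficiently small u > 0 there is v > v0 with (u,v) in S. *)
Definition asymptotic_to_horizon (v0 : R) (S : pset) : Prop :=
  exists ustar, 0 < ustar /\ forall u, 0 < u < ustar -> exists v, v > v0 /\ S u v.

(* Main.v *)
Require Import Defs.
From Stdlib Require Import Reals Lra Classical.
From Coquelicot Require Import Coquelicot.
Open Scope R_scope.

Ltac sabs := unfold Rabs in *; repeat destruct Rcase_abs; lra.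

Lemma mono_le (g : R -> R) a b : a <= b ->
  (forall y, a <= y <= b -> ex_derive g y /\ 0 <= Derive g y) -> g a <= g b.
Proof.
  intros Hab H.
  destruct (MVT_gen g a b (Derive g)) as [c [Hc Heq]].
  - intros x Hx. rewrite Rmin_left in Hx by lra. rewrite Rmax_right in Hx by lra.
    apply Derive_correct. apply H; lra.
  - intros x Hx. rewrite Rmin_left in Hx by lra. rewrite Rmax_right in Hx by lra.
    apply continuity_pt_filterlim. exact (ex_derive_continuous (K:=R_AbsRing) (V:=R_NormedModule) g x (proj1 (H x ltac:(lra)))).
  - rewrite Rmin_left in Hc by lra. rewrite Rmax_right in Hc by lra.
    destruct (H c Hc) as [_ Hd]. nra.
Qed.

Lemma mono_ge (g : R -> R) a b : a <= b ->
  (forall y, a <= y <= b -> ex_derive g y /\ Derive g y <= 0) -> g b <= g a.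
Proof.
  intros Hab H.
  destruct (MVT_gen g a b (Derive g)) as [c [Hc Heq]].
  - intros x Hx. rewrite Rmin_left in Hx by lra. rewrite Rmax_right in Hx by lra.
    apply Derive_correct. apply H; lra.
  - intros x Hx. rewrite Rmin_left in Hx by lra. rewrite Rmax_right in Hx by lra.
    apply continuity_pt_filterlim. exact (ex_derive_continuous (K:=R_AbsRing) (V:=R_NormedModule) g x (proj1 (H x ltac:(lra)))).
  - rewrite Rmin_left in Hc by lra. rewrite Rmax_right in Hc by lra.
    destruct (H c Hc) as [_ Hd]. nra.
Qed.

Lemma deriv_neg (f : R -> R) z : ex_derive f z -> Derive f z < 0 ->
  exists h0, 0 < h0 /\ forall h, 0 < h < h0 -> f (z + h) < f z.
Proof.
  intros He Hd.
  assert (Hi := Derive_correct f z He).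
  apply is_derive_Reals in Hi.
  destruct (Hi (- Derive f z)) as [d Hdl]; [lra|].
  exists d. split; [apply cond_pos|]. intros h Hh.
  assert (Hh0 : h <> 0) by lra.
  assert (Hha : Rabs h < d) by sabs.
  specialize (Hdl h Hh0 Hha).
  apply Rabs_def2 in Hdl. destruct Hdl as [Hdl _].
  set (q := (f (z + h) - f z) / h) in *.
  assert (Hq : q * h = f (z + h) - f z) by (unfold q; field; lra).
  nra.
Qed.

Lemma row_pos (f : R -> R) (b : R) : 0 <= b -> f 0 > 0 -> f b > 0 ->
  (forall x, 0 <= x <= b -> forall eps, 0 < eps -> exists d, 0 < d /\
      forall x', Rabs (x' - x) < d -> Rabs (f x' - f x) < eps) ->
  (forall x, 0 <= x <= b -> f x = 0 -> ex_derive f x /\ Derive f x < 0) ->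
  forall x, 0 <= x <= b -> f x > 0.
Proof.
  intros Hb H0 Hb' Hc Hd x0 Hx0.
  apply Rnot_le_gt. intro Hf0.
  set (S := fun y => x0 <= y <= b /\ f y <= 0).
  destruct (completeness S) as [z [Hub Hlub]].
  - exists b. intros y [Hy _]. lra.
  - exists x0. split; [lra|exact Hf0].
  - assert (Hz1 : x0 <= z) by (apply Hub; split; [lra|exact Hf0]).
    assert (Hz2 : z <= b) by (apply Hlub; intros y [Hy _]; lra).
    assert (Hfz : f z <= 0).
    { apply Rnot_gt_le. intro Hpos.
      destruct (Hc z ltac:(lra) (f z) Hpos) as [d [Hd0 Hdd]].
      destruct (classic (exists y, S y /\ y > z - d/2)) as [[y [[Hy Hfy] Hy2]] | Hn].
      - assert (Hyz : y <= z) by (apply Hub; split; assumption).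
        assert (Hya : Rabs (y - z) < d) by sabs.
        specialize (Hdd y Hya). apply Rabs_def2 in Hdd. lra.
      - assert (z <= z - d/2); [|lra].
        apply Hlub. intros y Hy. apply Rnot_lt_le. intro Hlt. apply Hn. exists y. split; [exact Hy|lra]. }
    assert (Hzb : z < b) by (destruct (Req_dec z b); [subst; lra|lra]).
    destruct (Rle_lt_or_eq_dec _ _ Hfz) as [Hneg | Hzero].
    + destruct (Hc z ltac:(lra) (- f z) ltac:(lra)) as [d [Hd0 Hdd]].
      set (y := z + Rmin d (b - z) / 2).
      assert (Hm1 := Rmin_l d (b - z)). assert (Hm2 := Rmin_r d (b - z)).
      assert (Hm3 : 0 < Rmin d (b - z)) by (apply Rmin_glb_lt; lra).
      assert (Hya : Rabs (y - z) < d) by (unfold y; sabs).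
      specialize (Hdd y Hya). apply Rabs_def2 in Hdd.
      assert (y <= z) by (apply Hub; split; [unfold y; lra|lra]).
      unfold y in *; lra.
    + destruct (Hd z ltac:(lra) Hzero) as [He Hdn].
      destruct (deriv_neg f z He Hdn) as [h0 [Hh0 Hh]].
      set (h := Rmin h0 (b - z) / 2).
      assert (Hm1 := Rmin_l h0 (b - z)). assert (Hm2 := Rmin_r h0 (b - z)).
      assert (Hm3 : 0 < Rmin h0 (b - z)) by (apply Rmin_glb_lt; lra).
      specialize (Hh h ltac:(unfold h; lra)).
      assert (z + h <= z) by (apply Hub; split; [unfold h; lra|lra]).
      unfold h in *; lra.
Qed.

Lemma dm_formula (R0 O Ru Rv : R -> R) z :
  ex_derive R0 z -> ex_derive O z -> ex_derive Ru z -> ex_derive Rv z -> O z <> 0 -> Rv z = 0 ->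
  Derive (fun x => R0 x / 2 * (1 + 4 * / (O x ^ 2) * Ru x * Rv x)) z
  = Derive R0 z / 2 + 2 * R0 z * / (O z ^ 2) * Ru z * Derive Rv z.
Proof.
  intros H1 H2 H3 H4 H5 H6.
  apply is_derive_unique. auto_derive.
  - split; [auto|split; [auto|split; [|auto]]].
    rewrite Rmult_1_r; apply Rmult_integral_contrapositive_currified; auto.
  - simpl in z. pattern (Rv z). rewrite H6. cbv beta. change (Derive (fun x : R => R0 x) z) with (Derive R0 z). change (Derive (fun x : R => Rv x) z) with (Derive Rv z). generalize (Derive R0 z) (Derive (fun x : R => O x) z) (Derive (fun x : R => Ru x) z) (Derive Rv z) (R0 z) (Ru z) (O z) H5. intros. field. auto.
Qed.
Theorem proposition4
  (u0 v0 : R) (Hu0 : 0 < u0) (Hv0 : 0 < v0)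
  (G : R -> R -> Prop) (Om r Tuu Tuv Tvv : R -> R -> R)
  (* G(u0,v0): globally hyperbolic, relatively open in K(u0,v0),
     containing C_in and C_out *)
  (HGK : forall u v, G u v -> K u0 v0 u v)
  (HGopen : rel_open_K u0 v0 G)
  (HGgh : glob_hyp u0 v0 G)
  (HCin : forall u, 0 <= u <= u0 -> G u v0)
  (HCout : forall v, v0 <= v -> G 0 v)
  (* smoothness *)
  (Hsmooth : exists V, open2 V /\ (forall u v, G u v -> V u v) /\
      smooth_on V Om /\ smooth_on V r /\ smooth_on V Tuu /\
      smooth_on V Tuv /\ smooth_on V Tvv)
  (HOm : forall u v, G u v -> 0 < Om u v)
  (Hr0 : forall u v, G u v -> 0 <= r u v)
  (HrCin : forall u, 0 <= u <= u0 -> 0 < r u v0)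
  (HrCout : forall v, v0 <= v -> 0 < r 0 v)
  (* Einstein equations (Raychaudhuri and mass equations) *)
  (Hray_u : forall u v, G u v ->
      du (fun a b => / (Om a b ^ 2) * du r a b) u v
        = - r u v * / (Om u v ^ 2) * Tuu u v)
  (Hray_v : forall u v, G u v ->
      dv (fun a b => / (Om a b ^ 2) * dv r a b) u v
        = - r u v * / (Om u v ^ 2) * Tvv u v)
  (Hm_u : forall u v, G u v ->
      du (hawking_mass Om r) u v
        = 2 * r u v ^ 2 * / (Om u v ^ 2) *
            (Tuv u v * du r u v - Tuu u v * dv r u v))
  (Hm_v : forall u v, G u v ->
      dv (hawking_mass Om r) u v
        = 2 * r u v ^ 2 * / (Om u v ^ 2) *
            (Tuv u v * dv r u v - Tvv u v * du r u v))
  (rplus mplus : R)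
  (* (III): r_+ = sup_{C_out} r is finite *)
  (Hrplus : is_lub (fun x => exists v, v0 <= v /\ x = r 0 v) rplus)
  (* (IV): 0 <= m along C_out and m_+ = sup_{C_out} m is finite *)
  (Hmplus : is_lub (fun x => exists v, v0 <= v /\ x = hawking_mass Om r 0 v) mplus)
  (Hm0 : forall v, v0 <= v -> 0 <= hawking_mass Om r 0 v)
  (* (I) *)
  (HT : forall u v, G u v -> 0 <= Tuu u v /\ 0 <= Tuv u v /\ 0 <= Tvv u v)
  (* (II) *)
  (HII : forall pu pv, G pu pv -> forall u v, Jminus u0 v0 pu pv u v -> G u v)
  (* (V), (VI) *)
  (HV : forall v, v0 <= v -> du r 0 v < 0)
  (HVI : forall v, v0 <= v -> dv r 0 v > 0)
  (* (VII) *)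
  (HVII : forall pu pv qu qv,
      closureK u0 v0 (regR G r) pu pv ->
      closureK u0 v0 (regR G r) qu qv ->
      Iminus u0 v0 pu pv qu qv ->
      (forall u v, Jminus u0 v0 pu pv u v -> Jplus u0 v0 qu qv u v ->
         ~ (u = pu /\ v = pv) -> regR G r u v \/ mttA G r u v) ->
      regR G r pu pv \/ mttA G r pu pv)
  (* condition (A) on A \cap W(delta) *)
  (delta : R) (Hdelta : 0 < delta)
  (HA : forall u v, mttA G r u v -> Wset G r rplus delta u v ->
      Tuv u v * / (Om u v ^ 2) < / (4 * r u v ^ 2))
  (* no marginally trapped tube asymptotic to the event horizon *)
  (Hnoasym : ~ asymptotic_to_horizon v0 (mttA G r)) :
  exists u1 v1, 0 < u1 <= u0 /\ v0 <= v1 /\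
    forall u v, K u1 v1 u v -> Wset G r rplus delta u v /\ regR G r u v.
Proof.
  destruct Hsmooth as [V [HVo [HGV [SOm [Sr _]]]]].
  destruct HGopen as [U [HUo HUG]].
  assert (Gopen : forall u v, G u v -> exists e, 0 < e /\ forall u' v',
      Rabs (u' - u) < e -> Rabs (v' - v) < e -> K u0 v0 u' v' -> G u' v').
  { intros u v Huv. destruct (proj1 (HUG u v) Huv) as [HU _].
    destruct (HUo u v HU) as [e [He Hb]]. exists e. split; [exact He|].
    intros u' v' H1 H2 H3. apply HUG. split; [apply Hb; assumption|exact H3]. }
  assert (Dr : forall u v, G u v -> ex_derive (fun x => r x v) u /\
     ex_derive (fun y => r u y) v /\ cont2 r u v)
    by (intros u v H; exact (Sr nil u v (HGV _ _ H))).
  assert (Dru : forall u v, G u v -> ex_derive (fun x => du r x v) u)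
    by (intros u v H; exact (proj1 (Sr (cons true nil) u v (HGV _ _ H)))).
  assert (Drv : forall u v, G u v -> ex_derive (fun x => dv r x v) u /\ cont2 (dv r) u v)
    by (intros u v H; destruct (Sr (cons false nil) u v (HGV _ _ H)) as [A [_ C]]; split; [exact A|exact C]).
  assert (DOm : forall u v, G u v -> ex_derive (fun x => Om x v) u)
    by (intros u v H; exact (proj1 (SOm nil u v (HGV _ _ H)))).
  assert (Hur : forall u v, G u v -> du r u v < 0).
  { intros u v Huv. destruct (HGK u v Huv) as [[Hu1 Hu2] Hv].
    assert (Hseg : forall x, 0 <= x <= u -> G x v).
    { intros x Hx. apply (HII u v Huv). split; [split; [split; lra|lra]|lra]. }
    set (a := fun x => / (Om x v ^ 2) * du r x v).
    assert (Ha : a u <= a 0).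
    { apply mono_ge; [lra|]. intros y Hy.
      assert (Gy := Hseg y Hy). assert (Oy := HOm y v Gy).
      assert (Ea : ex_derive a y).
      { unfold a. auto_derive. repeat split.
        - apply DOm; auto.
        - rewrite Rmult_1_r; apply Rmult_integral_contrapositive_currified; lra.
        - apply Dru; auto. }
      split; [exact Ea|].
      change (du (fun a b => / (Om a b ^ 2) * du r a b) y v <= 0).
      rewrite (Hray_u y v Gy).
      destruct (HT y v Gy) as [T1 _]. assert (Rr := Hr0 y v Gy).
      assert (0 < / (Om y v ^ 2)) by (apply Rinv_0_lt_compat; nra).
      assert (0 <= r y v * / (Om y v ^ 2) * Tuu y v)
        by (apply Rmult_le_pos; [apply Rmult_le_pos; lra|lra]).
      lra. }
    assert (H0 : a 0 < 0).
    { unfold a. assert (HG0 := HCout v Hv). assert (O0 := HOm 0 v HG0).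
      assert (0 < / (Om 0 v ^ 2)) by (apply Rinv_0_lt_compat; nra).
      assert (HV0 := HV v Hv). nra. }
    unfold a in Ha, H0. assert (Ou := HOm u v Huv).
    assert (0 < / (Om u v ^ 2)) by (apply Rinv_0_lt_compat; nra).
    nra. }
  assert (HAsign : forall z v, G z v -> dv r z v = 0 -> r z v >= rplus - delta ->
            Derive (fun x => dv r x v) z < 0).
  { intros z v Gz Hz0 HW.
    assert (HAz := HA z v (conj Gz (conj Hz0 (Hur z v Gz))) (conj Gz HW)).
    assert (Hm := Hm_u z v Gz).
    assert (Oz := HOm z v Gz).
    assert (E := dm_formula (fun x => r x v) (fun x => Om x v) (fun x => du r x v)
                   (fun x => dv r x v) z (proj1 (Dr z v Gz)) (DOm z v Gz) (Dru z v Gz)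
                   (proj1 (Drv z v Gz)) ltac:(lra) Hz0).
    cbv beta in E.
    change (Derive (fun x => r x v / 2 * (1 + 4 * / (Om x v ^ 2) * du r x v * dv r x v)) z
       = 2 * r z v ^ 2 * / (Om z v ^ 2) * (Tuv z v * du r z v - Tuu z v * dv r z v)) in Hm.
    rewrite E in Hm. clear E.
    change (Derive (fun x => r x v) z) with (du r z v) in Hm.
    rewrite Hz0 in Hm.
    assert (Hu := Hur z v Gz). assert (Rr := Hr0 z v Gz).
    assert (Hio : 0 < / (Om z v ^ 2)) by (apply Rinv_0_lt_compat; nra).
    set (D := Derive (fun x => dv r x v) z) in *.
    set (io := / (Om z v ^ 2)) in *.
    set (ru := du r z v) in *. set (rr := r z v) in *. set (T := Tuv z v) in *.
    assert (Heq : ru * (/2 + 2 * rr * io * D - 2 * rr ^ 2 * io * T) = 0) .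
    { replace (ru * (/2 + 2 * rr * io * D - 2 * rr ^ 2 * io * T)) with
        ((ru / 2 + 2 * rr * io * ru * D) - 2 * rr ^ 2 * io * (T * ru - Tuu z v * 0)) by field.
      rewrite Hm. ring. }
    apply Rmult_integral in Heq. destruct Heq as [Heq|Heq]; [lra|].
    assert (Hrr : 0 < rr).
    { destruct (Rle_lt_or_eq_dec _ _ Rr) as [|He]; [assumption|].
      rewrite <- He in Heq. lra. }
    assert (H4 : 4 * rr ^ 2 * (T * io) < 1).
    { assert (0 < 4 * rr ^ 2) by nra.
      apply Rmult_lt_compat_l with (r := 4 * rr ^ 2) in HAz; [|assumption].
      rewrite Rinv_r in HAz by lra. exact HAz. }
    assert (rr * io * D < 0) by nra.
    assert (0 < rr * io) by nra.
    nra. }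
  assert (Hv1ex : exists v1, v0 <= v1 /\ r 0 v1 > rplus - delta / 2).
  { apply NNPP. intro Hn. destruct Hrplus as [_ Hl].
    assert (rplus <= rplus - delta / 2); [|lra].
    apply Hl. intros x [v [Hv Hx]]. subst x. apply Rnot_lt_le. intro Hlt.
    apply Hn. exists v. split; [exact Hv|lra]. }
  destruct Hv1ex as [v1 [Hv1 Hrv1]].
  assert (G01 : G 0 v1) by (apply HCout; exact Hv1).
  assert (Hdv01 : dv r 0 v1 > 0) by (apply HVI; exact Hv1).
  destruct (proj2 (proj2 (Dr 0 v1 G01)) (delta / 2) ltac:(lra)) as [d1 [Hd1 Hd1b]].
  destruct (proj2 (Drv 0 v1 G01) (dv r 0 v1) Hdv01) as [d2 [Hd2 Hd2b]].
  destruct (Gopen 0 v1 G01) as [d3 [Hd3 Hd3b]].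
  set (ustar := Rmin (Rmin d1 d2) (Rmin d3 u0)).
  assert (Hus1 : ustar <= d1) by (unfold ustar; pose proof (Rmin_l (Rmin d1 d2) (Rmin d3 u0)); pose proof (Rmin_l d1 d2); lra).
  assert (Hus2 : ustar <= d2) by (unfold ustar; pose proof (Rmin_l (Rmin d1 d2) (Rmin d3 u0)); pose proof (Rmin_r d1 d2); lra).
  assert (Hus3 : ustar <= d3) by (unfold ustar; pose proof (Rmin_r (Rmin d1 d2) (Rmin d3 u0)); pose proof (Rmin_l d3 u0); lra).
  assert (Hus4 : ustar <= u0) by (unfold ustar; pose proof (Rmin_r (Rmin d1 d2) (Rmin d3 u0)); pose proof (Rmin_r d3 u0); lra).
  assert (Hus0 : 0 < ustar) by (unfold ustar; apply Rmin_glb_lt; apply Rmin_glb_lt; lra).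
  assert (Hu1ex : exists u1, 0 < u1 < ustar /\ forall v, v > v0 -> ~ mttA G r u1 v).
  { apply NNPP. intro Hn. apply Hnoasym. exists ustar. split; [exact Hus0|].
    intros u Hu. apply NNPP. intro Hn2. apply Hn. exists u. split; [exact Hu|].
    intros v Hv HAv. apply Hn2. exists v. split; assumption. }
  destruct Hu1ex as [u1 [[Hu1a Hu1b] Hline]].
  assert (Gu1v1 : G u1 v1).
  { apply Hd3b; [sabs|sabs|]. split; [split; lra|lra]. }
  assert (Hdvu1 : dv r u1 v1 > 0).
  { assert (Hx := Hd2b u1 v1 ltac:(sabs) ltac:(sabs)). apply Rabs_def2 in Hx. lra. }
  assert (Hru1 : r u1 v1 > rplus - delta).
  { assert (Hx := Hd1b u1 v1 ltac:(sabs) ltac:(sabs)). apply Rabs_def2 in Hx. lra. }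
  set (P := fun t => G u1 t /\ forall v, v1 <= v <= t -> dv r u1 v > 0).
  assert (Pv1 : P v1).
  { split; [exact Gu1v1|]. intros v Hv. replace v with v1 by lra. exact Hdvu1. }
  assert (Pdown : forall t t', P t -> v1 <= t' <= t -> P t').
  { intros t t' [Gt Ht] Ht'. split.
    - apply (HII u1 t Gt). split; [split; [split; lra|lra]|lra].
    - intros v Hv. apply Ht. lra. }
  assert (Pcons : forall t, P t -> forall u v, 0 <= u <= u1 -> v1 <= v <= t ->
            G u v /\ r u v > rplus - delta /\ dv r u v > 0 /\ du r u v < 0).
  { intros t [Gt Ht] u v Hu Hv.
    assert (Gu1v : G u1 v) by (apply (HII u1 t Gt); split; [split; [split; lra|lra]|lra]).
    assert (Grow : forall x, 0 <= x <= u1 -> G x v)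
      by (intros x Hx; apply (HII u1 v Gu1v); split; [split; [split; lra|lra]|lra]).
    assert (Hr1 : r u1 v1 <= r u1 v).
    { apply (mono_le (fun y => r u1 y)); [lra|]. intros y Hy.
      assert (Gy : G u1 y) by (apply (HII u1 v Gu1v); split; [split; [split; lra|lra]|lra]).
      split; [exact (proj1 (proj2 (Dr u1 y Gy)))|].
      change (0 <= dv r u1 y). left. apply Ht. lra. }
    assert (HWrow : forall x, 0 <= x <= u1 -> r x v > rplus - delta).
    { intros x Hx. assert (r u1 v <= r x v); [|lra].
      apply (mono_ge (fun x => r x v)); [lra|]. intros y Hy.
      assert (Gy := Grow y ltac:(lra)).
      split; [exact (proj1 (Dr y v Gy))|].
      change (du r y v <= 0). left. apply Hur. exact Gy. }
    assert (Hpos : dv r u v > 0).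
    { apply (row_pos (fun x => dv r x v) u1); [lra| |apply Ht; lra| | |exact Hu].
      - apply HVI. lra.
      - intros x Hx eps Heps. destruct (proj2 (Drv x v (Grow x Hx)) eps Heps) as [d [Hd Hdb]].
        exists d. split; [exact Hd|]. intros x' Hx'. apply Hdb; [exact Hx'|sabs].
      - intros x Hx Hz. split; [exact (proj1 (Drv x v (Grow x Hx)))|].
        apply HAsign; [exact (Grow x Hx)|exact Hz|]. left. apply HWrow. exact Hx. }
    split; [exact (Grow u Hu)|]. split; [apply HWrow; exact Hu|]. split; [exact Hpos|].
    apply Hur. exact (Grow u Hu). }
  destruct (classic (forall t, v1 <= t -> P t)) as [Hall | Hnot].
  { exists u1, v1. split; [split; lra|]. split; [exact Hv1|].
    intros u v [[Hu0' Hu1'] Hv].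
    destruct (Pcons v (Hall v Hv) u v ltac:(lra) ltac:(lra)) as [Guv [Wuv [Dv Du]]].
    split; [split; [exact Guv|lra]|]. split; [exact Guv|split; assumption]. }
  exfalso.
  destruct (not_all_ex_not _ _ Hnot) as [t0 Ht0].
  destruct (imply_to_and _ _ Ht0) as [Ht0a Ht0b].
  set (Tset := fun t => v1 <= t /\ P t).
  destruct (completeness Tset) as [ts [Hub Hlub]].
  { exists t0. intros t [Ht Pt]. apply Rnot_lt_le. intro Hlt. apply Ht0b.
    apply (Pdown t t0 Pt). lra. }
  { exists v1. split; [lra|exact Pv1]. }
  assert (Hts1 : v1 <= ts) by (apply Hub; split; [lra|exact Pv1]).
  assert (Hbelow : forall v, v1 <= v < ts -> P v).
  { intros v Hv. destruct (classic (exists t, Tset t /\ t > v)) as [[t [[_ Pt] Htv]] | Hn].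
    - apply (Pdown t v Pt). lra.
    - exfalso. assert (ts <= v); [|lra]. apply Hlub. intros t Ht.
      apply Rnot_lt_le. intro Hlt. apply Hn. exists t. split; [exact Ht|lra]. }
  destruct (classic (G u1 ts)) as [Gts | nGts].
  -
    assert (Pts : P ts).
    { split; [exact Gts|]. intros v Hv.
      destruct (Rle_lt_or_eq_dec _ _ (proj2 Hv)) as [Hlt | Heq].
      - apply (proj2 (Hbelow v ltac:(lra))). lra.
      - subst v. destruct (Rle_lt_or_eq_dec _ _ Hts1) as [Hlt1 | Heq1].
        + assert (Hge : dv r u1 ts >= 0).
          { apply Rnot_lt_ge. intro Hneg.
            destruct (proj2 (Drv u1 ts Gts) (- dv r u1 ts) ltac:(lra)) as [d [Hd Hdb]].
            set (v' := ts - Rmin d (ts - v1) / 2).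
            assert (Hm1 := Rmin_l d (ts - v1)). assert (Hm2 := Rmin_r d (ts - v1)).
            assert (Hm3 : 0 < Rmin d (ts - v1)) by (apply Rmin_glb_lt; lra).
            assert (Hx := Hdb u1 v' ltac:(sabs) ltac:(unfold v'; sabs)).
            apply Rabs_def2 in Hx.
            assert (Hp := proj2 (Hbelow v' ltac:(unfold v'; lra)) v' ltac:(unfold v'; lra)).
            lra. }
          destruct (Rge_gt_or_eq _ _ Hge) as [Hgt | Hz]; [exact Hgt|].
          exfalso. apply (Hline ts ltac:(lra)). split; [exact Gts|]. split; [exact Hz|].
          apply Hur; exact Gts.
        + subst ts. exact Hdvu1. }
    destruct (Gopen u1 ts Gts) as [e [He Heb]].
    destruct (proj2 (Drv u1 ts Gts) (dv r u1 ts) (proj2 Pts ts ltac:(lra))) as [d [Hd Hdb]].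
    set (t' := ts + Rmin e d / 2).
    assert (Hm1 := Rmin_l e d). assert (Hm2 := Rmin_r e d).
    assert (Hm3 : 0 < Rmin e d) by (apply Rmin_glb_lt; lra).
    assert (Pt' : P t').
    { split.
      - apply Heb; [sabs|unfold t'; sabs|]. split; [split; lra|unfold t'; lra].
      - intros v Hv. destruct (Rle_or_lt v ts) as [Hle | Hlt].
        + apply (proj2 Pts). lra.
        + assert (Hx := Hdb u1 v ltac:(sabs) ltac:(unfold t' in Hv; sabs)).
          apply Rabs_def2 in Hx. lra. }
    assert (t' <= ts) by (apply Hub; split; [unfold t'; lra|exact Pt']).
    unfold t' in *. lra.
  -
    assert (Hts2 : v1 < ts).
    { destruct (Rle_lt_or_eq_dec _ _ Hts1) as [|Heq]; [assumption|]. subst ts. contradiction. }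
    set (Q := fun s => 0 <= s <= u1 /\ forall s', 0 <= s' <= s -> G s' ts).
    assert (G0ts : G 0 ts) by (apply HCout; lra).
    destruct (completeness Q) as [ss [Hub2 Hlub2]].
    { exists u1. intros s [Hs _]. lra. }
    { exists 0. split; [lra|]. intros s' Hs'. replace s' with 0 by lra. exact G0ts. }
    assert (Hss0 : 0 <= ss).
    { apply Hub2. split; [lra|]. intros s' Hs'. replace s' with 0 by lra. exact G0ts. }
    assert (Hss1 : ss <= u1) by (apply Hlub2; intros s [Hs _]; lra).
    assert (Hleft : forall s, 0 <= s < ss -> G s ts).
    { intros s Hs. destruct (classic (exists q, Q q /\ q > s)) as [[q [[Hq Hq2] Hqs]] | Hn].
      - apply Hq2. lra.
      - exfalso. assert (ss <= s); [|lra]. apply Hlub2. intros q Hq.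
        apply Rnot_lt_le. intro Hlt. apply Hn. exists q. split; [exact Hq|lra]. }
    assert (HnG : ~ G ss ts).
    { intro Gss. destruct (Rle_lt_or_eq_dec _ _ Hss1) as [Hlt | Heq]; [|subst ss; contradiction].
      destruct (Gopen ss ts Gss) as [e [He Heb]].
      set (s2 := ss + Rmin e (u1 - ss) / 2).
      assert (Hm1 := Rmin_l e (u1 - ss)). assert (Hm2 := Rmin_r e (u1 - ss)).
      assert (Hm3 : 0 < Rmin e (u1 - ss)) by (apply Rmin_glb_lt; lra).
      assert (Qs2 : Q s2).
      { split; [unfold s2; lra|]. intros s' Hs'.
        destruct (Rlt_or_le s' ss) as [Hl | Hl].
        - apply Hleft. lra.
        - apply Heb; [unfold s2 in Hs'; sabs|sabs|]. split; [split; unfold s2 in Hs'; lra|lra]. }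
      assert (s2 <= ss) by (apply Hub2; exact Qs2). unfold s2 in *. lra. }
    assert (Hss2 : 0 < ss).
    { destruct (Rle_lt_or_eq_dec _ _ Hss0) as [|Heq]; [assumption|]. subst ss. contradiction. }
    assert (Hrowts : forall s, 0 <= s < ss -> dv r s ts >= 0).
    { intros s Hs. apply Rnot_lt_ge. intro Hneg.
      destruct (proj2 (Drv s ts (Hleft s Hs)) (- dv r s ts) ltac:(lra)) as [d [Hd Hdb]].
      set (v' := ts - Rmin d (ts - v1) / 2).
      assert (Hm1 := Rmin_l d (ts - v1)). assert (Hm2 := Rmin_r d (ts - v1)).
      assert (Hm3 : 0 < Rmin d (ts - v1)) by (apply Rmin_glb_lt; lra).
      assert (Hx := Hdb s v' ltac:(sabs) ltac:(unfold v'; sabs)).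
      apply Rabs_def2 in Hx.
      destruct (Pcons v' (Hbelow v' ltac:(unfold v'; lra)) s v' ltac:(lra) ltac:(unfold v'; lra))
        as [_ [_ [Hp _]]].
      lra. }
    assert (HV7 := HVII ss ts 0 v1).
    destruct HV7 as [[Gp _] | [Gp _]]; [| | | | exact (HnG Gp) | exact (HnG Gp)].
    + split; [split; [split; lra|lra]|]. intros eps Heps.
      set (v' := ts - Rmin eps (ts - v1) / 2).
      assert (Hm1 := Rmin_l eps (ts - v1)). assert (Hm2 := Rmin_r eps (ts - v1)).
      assert (Hm3 : 0 < Rmin eps (ts - v1)) by (apply Rmin_glb_lt; lra).
      exists ss, v'.
      destruct (Pcons v' (Hbelow v' ltac:(unfold v'; lra)) ss v' ltac:(lra) ltac:(unfold v'; lra))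
        as [Gq [_ [Hq1 Hq2]]].
      split; [split; [exact Gq|split; assumption]|]. split; [sabs|unfold v'; sabs].
    + split; [split; [split; lra|lra]|]. intros eps Heps. exists 0, v1.
      split; [split; [exact G01|split; [exact Hdv01|apply HV; lra]]|]. split; sabs.
    + split; [split; [split; lra|lra]|]. split; lra.
    + intros u v [Ku [Hu Hv]] [Ku' [Hu' Hv']] Hne.
      destruct (Rle_lt_or_eq_dec _ _ Hv) as [Hlt | Heq].
      * left. destruct (Pcons v (Hbelow v ltac:(lra)) u v ltac:(destruct Ku; lra) ltac:(lra))
          as [Gq [_ [Hq1 Hq2]]].
        split; [exact Gq|split; assumption].
      * subst v. assert (Hus : u < ss).
        { destruct (Rle_lt_or_eq_dec _ _ Hu) as [|Hequ]; [assumption|]. exfalso. apply Hne. split; auto. }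
        assert (Gu := Hleft u ltac:(destruct Ku; lra)).
        destruct (Rge_gt_or_eq _ _ (Hrowts u ltac:(destruct Ku; lra))) as [Hgt | Hz].
        -- left. split; [exact Gu|split; [exact Hgt|apply Hur; exact Gu]].
        -- right. split; [exact Gu|split; [exact Hz|apply Hur; exact Gu]].
Qed.
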